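(* Let $\mathcal{A}$ be an alternative $W^{*}$-factor, $\mathcal{B}$ an alternative complex $\ast$-algebra, and $\Phi:\mathcal{A}\to\mathcal{B}$ a bijection preserving product $ab+ba^{*}$ (resp. $ab-ba^{*}$). Let $p_{1}\in\mathcal{A}$ be a projection with $p_{1}\neq 1_{\mathcal{A}}$, $p_{2}=1_{\mathcal{A}}-p_{1}$, and $\mathcal{A}_{ij}=p_{i}\mathcal{A}p_{j}$. Then for all $a_{11}\in\mathcal{A}_{11}$, $b_{12}\in\mathcal{A}_{12}$, $c_{21}\in\mathcal{A}_{21}$, $d_{22}\in\mathcal{A}_{22}$: (i) $\Phi(a_{11}+b_{12}+c_{21})=\Phi(a_{11})+\Phi(b_{12})+\Phi(c_{21})$; (ii) $\Phi(b_{12}+c_{21}+d_{22})=\Phi(b_{12})+\Phi(c_{21})+\Phi(d_{22})$.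
   Context: An alternative $W^{*}$-factor is a prime alternative $C^{*}$-algebra (complete normed alternative complex $\ast$-algebra with $\|a^{*}a\|=\|a\|^{2}$) that is a dual Banach space; it is unital. A projection is a nonzero self-adjoint idempotent. $\mathcal{A}_{ij}$ are the Peirce components with respect to $p_{1}$. $\Phi$ preserves product $ab+ba^{*}$ (resp. $ab-ba^{*}$) if $\Phi(ab+ba^{*})=\Phi(a)\Phi(b)+\Phi(b)\Phi(a)^{*}$ (resp. $\Phi(ab-ba^{*})=\Phi(a)\Phi(b)-\Phi(b)\Phi(a)^{*}$) for all $a,b\in\mathcal{A}$. *)

(* Defs.v *)
From HB Require Import structures.
From mathcomp Require Import all_boot all_order all_algebra.
From mathcomp Require Import complex.
From mathcomp Require Import Rstruct.

Set Implicit Arguments.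
Unset Strict Implicit.
Unset Printing Implicit Defensive.

Import Order.TTheory GRing.Theory Num.Theory.
Local Open Scope ring_scope.

Definition CC : numClosedFieldType := (Rdefinitions.R)[i].

Section AltAlg.
Variable (A : lmodType CC) (mul : A -> A -> A) (star : A -> A).

Definition bilinear_mul : Prop :=
  (forall (k : CC) (a b c : A), mul (k *: a + b) c = k *: mul a c + mul b c) /\
  (forall (k : CC) (a b c : A), mul a (k *: b + c) = k *: mul a b + mul a c).

Definition alternative_mul : Prop :=
  (forall a b : A, mul (mul a a) b = mul a (mul a b)) /\
  (forall a b : A, mul (mul b a) a = mul b (mul a a)).

Definition is_involution : Prop :=
  (forall (k : CC) (a b : A), star (k *: a + b) = (Num.conj k) *: star a + star b) /\
  (forall a : A, star (star a) = a) /\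
  (forall a b : A, star (mul a b) = mul (star b) (star a)).

Definition alt_star_algebra : Prop :=
  [/\ bilinear_mul, alternative_mul & is_involution].

Definition is_ideal (I : A -> Prop) : Prop :=
  [/\ I 0,
      (forall (k : CC) (a b : A), I a -> I b -> I (k *: a + b)) &
      (forall a x : A, I a -> I (mul a x) /\ I (mul x a))].

Definition prime_alg : Prop :=
  forall I J : A -> Prop, is_ideal I -> is_ideal J ->
    (forall i j, I i -> J j -> mul i j = 0) ->
    (forall i, I i -> i = 0) \/ (forall j, J j -> j = 0).

Definition is_unit (one : A) : Prop :=
  forall a : A, mul one a = a /\ mul a one = a.

Definition is_projection (p : A) : Prop :=
  [/\ p <> 0, star p = p & mul p p = p].

End AltAlg.

(** * Norms (real-valued, encoded as nonnegative elements of CC) *)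
Definition is_norm (X : lmodType CC) (nrm : X -> CC) : Prop :=
  [/\ forall x, 0 <= nrm x,
      forall x, nrm x = 0 -> x = 0,
      forall (k : CC) x, nrm (k *: x) = `|k| * nrm x &
      forall x y, nrm (x + y) <= nrm x + nrm y].

Definition complete_for (X : lmodType CC) (nrm : X -> CC) : Prop :=
  forall u : nat -> X,
    (forall e : CC, 0 < e -> exists N : nat, forall m n : nat, (N <= m)%N -> (N <= n)%N ->
        nrm (u m - u n) < e) ->
    exists l : X, forall e : CC, 0 < e -> exists N : nat, forall n : nat, (N <= n)%N ->
        nrm (u n - l) < e.

Definition is_lub (S : CC -> Prop) (s : CC) : Prop :=
  (forall y, S y -> y <= s) /\ (forall z, (forall y, S y -> y <= z) -> s <= z).

(* A (with norm nrm) is a dual Banach space: it is isometrically linearly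
   isomorphic to the dual X* (bounded linear functionals with the operator
   norm) of some normed complex space X. *)
Definition dual_banach (A : lmodType CC) (nrm : A -> CC) : Prop :=
  exists (X : lmodType CC) (nX : X -> CC) (T : A -> X -> CC),
    [/\ is_norm nX,
        (forall (k : CC) a b x, T (k *: a + b) x = k * T a x + T b x),
        (forall a (k : CC) x y, T a (k *: x + y) = k * T a x + T a y),
        (forall a, is_lub (fun r => exists x, nX x <= 1 /\ r = `|T a x|) (nrm a)) &
        (forall f : X -> CC,
           (forall (k : CC) x y, f (k *: x + y) = k * f x + f y) ->
           (exists M : CC, forall x, `|f x| <= M * nX x) ->
           exists a, forall x, T a x = f x)].

Definition alt_Cstar_algebra (A : lmodType CC) (mul : A -> A -> A) (star : A -> A)
    (nrm : A -> CC) : Prop :=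
  [/\ alt_star_algebra mul star, is_norm nrm, complete_for nrm,
      (forall a b, nrm (mul a b) <= nrm a * nrm b) &
      (forall a, nrm (mul (star a) a) = nrm a ^+ 2)].

Definition alt_Wstar_factor (A : lmodType CC) (mul : A -> A -> A) (star : A -> A)
    (nrm : A -> CC) (one : A) : Prop :=
  [/\ alt_Cstar_algebra mul star nrm, prime_alg mul, dual_banach nrm & is_unit mul one].

Definition preserves_plus (A B : lmodType CC) (mulA : A -> A -> A) (starA : A -> A)
    (mulB : B -> B -> B) (starB : B -> B) (Phi : A -> B) : Prop :=
  forall a b, Phi (mulA a b + mulA b (starA a)) = mulB (Phi a) (Phi b) + mulB (Phi b) (starB (Phi a)).

Definition preserves_minus (A B : lmodType CC) (mulA : A -> A -> A) (starA : A -> A)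
    (mulB : B -> B -> B) (starB : B -> B) (Phi : A -> B) : Prop :=
  forall a b, Phi (mulA a b - mulA b (starA a)) = mulB (Phi a) (Phi b) - mulB (Phi b) (starB (Phi a)).

Definition peirce (A : lmodType CC) (mul : A -> A -> A) (pi pj x : A) : Prop :=
  exists a : A, x = mul (mul pi a) pj.

(* Main.v *)
Require Import Defs.
From HB Require Import structures.
From mathcomp Require Import all_boot all_order all_algebra.
From mathcomp Require Import complex.
Import Order.TTheory GRing.Theory Num.Theory.
Local Open Scope ring_scope.

Section Lin.
Variables (A : lmodType CC) (mul : A -> A -> A) (star : A -> A).
Hypothesis hbil : bilinear_mul mul.

Lemma mDl a b c : mul (a + b) c = mul a c + mul b c.
Proof. by have := hbil.1 1 a b c; rewrite !scale1r. Qed.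
Lemma mDr a b c : mul a (b + c) = mul a b + mul a c.
Proof. by have := hbil.2 1 a b c; rewrite !scale1r. Qed.
Lemma m0l c : mul 0 c = 0.
Proof. have H := mDl 0 0 c; rewrite addr0 in H.
by apply: (addrI (mul 0 c)); rewrite -H addr0. Qed.
Lemma m0r c : mul c 0 = 0.
Proof. have H := mDr c 0 0; rewrite addr0 in H.
by apply: (addrI (mul c 0)); rewrite -H addr0. Qed.
Lemma mZl k a c : mul (k *: a) c = k *: mul a c.
Proof. by have := hbil.1 k a 0 c; rewrite !addr0 m0l addr0. Qed.
Lemma mZr k a c : mul a (k *: c) = k *: mul a c.
Proof. by have := hbil.2 k a c 0; rewrite !addr0 m0r addr0. Qed.
Lemma mNl a c : mul (- a) c = - mul a c.
Proof. by rewrite -scaleN1r mZl scaleN1r. Qed.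
Lemma mNr a c : mul a (- c) = - mul a c.
Proof. by rewrite -scaleN1r mZr scaleN1r. Qed.
Lemma mBl a b c : mul (a - b) c = mul a c - mul b c.
Proof. by rewrite mDl mNl. Qed.
Lemma mBr a b c : mul a (b - c) = mul a b - mul a c.
Proof. by rewrite mDr mNr. Qed.

Hypothesis hinv : is_involution mul star.
Lemma sD a b : star (a + b) = star a + star b.
Proof. have := hinv.1 1 a b; rewrite !scale1r => ->.
congr (_ + _); rewrite -[RHS]scale1r; congr (_ *: _); exact: conjC1. Qed.
Lemma s0 : star 0 = 0.
Proof. have H := sD 0 0; rewrite addr0 in H.
by apply: (addrI (star 0)); rewrite -H addr0. Qed.
Lemma sZ k a : star (k *: a) = Num.conj k *: star a.
Proof. by have := hinv.1 k a 0; rewrite !addr0 s0 addr0. Qed.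
Lemma sN a : star (- a) = - star a.
Proof. rewrite -scaleN1r sZ rmorphN -[RHS]scaleN1r; congr (- _ *: _); exact: conjC1. Qed.
Lemma sK a : star (star a) = a. Proof. exact: hinv.2.1. Qed.
Lemma sM a b : star (mul a b) = mul (star b) (star a). Proof. exact: hinv.2.2. Qed.
End Lin.

Section OpLin.
Variables (B : lmodType CC) (mulB : B -> B -> B).
Hypothesis hbilB : bilinear_mul mulB.
Variables (starB : B -> B) (e : CC).
Definition opg a b := mulB a b + e *: mulB b (starB a).
Lemma opgDr u v x : opg x (u + v) = opg x u + opg x v.
Proof.
rewrite /opg (@mDl B mulB hbilB) (@mDr B mulB hbilB) scalerDr.
by rewrite -!addrA; congr (_ + _); rewrite addrCA.
Qed.
Hypothesis hinvB : is_involution mulB starB.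
Lemma opgDl u v x : opg (u + v) x = opg u x + opg v x.
Proof.
rewrite /opg (@mDl B mulB hbilB) (@sD B mulB starB hinvB) (@mDr B mulB hbilB) scalerDr.
by rewrite -!addrA; congr (_ + _); rewrite addrCA.
Qed.
Lemma opg0l x : opg 0 x = 0.
Proof. by rewrite /opg (@s0 B mulB starB hinvB) (@m0l B mulB hbilB) (@m0r B mulB hbilB) scaler0 addr0. Qed.
End OpLin.

Section Peirce.
Variables (A : lmodType CC) (mul : A -> A -> A) (star : A -> A) (one P : A).
Hypothesis hbil : bilinear_mul mul.
Hypothesis halt : alternative_mul mul.
Hypothesis hinv : is_involution mul star.
Hypothesis hone : is_unit mul one.
Hypothesis hPs : star P = P.
Hypothesis hPP : mul P P = P.

Local Notation mDl := (@mDl A mul hbil). Local Notation mDr := (@mDr A mul hbil).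
Local Notation mBl := (@mBl A mul hbil). Local Notation mBr := (@mBr A mul hbil).
Local Notation mZl := (@mZl A mul hbil). Local Notation mZr := (@mZr A mul hbil).

Local Notation sK := (@sK A mul star hinv). Local Notation sM := (@sM A mul star hinv).
Local Notation sD := (@sD A mul star hinv). Local Notation sZ := (@sZ A mul star hinv). Local Notation sN := (@sN A mul star hinv).
Local Notation m0l := (@m0l A mul hbil). Local Notation m0r := (@m0r A mul hbil).
Local Notation mNl := (@mNl A mul hbil). Local Notation mNr := (@mNr A mul hbil).

Lemma flex x y : mul (mul x y) x = mul x (mul y x).
Proof.
have H := halt.2 (y + x) x.
rewrite !mDl !mDr !mDl (halt.2 y x) (halt.2 x x) (halt.1 x y) in H.
apply: (addIr (mul x (mul x x))); apply: (addrI (mul x (mul x y))).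
apply: (addrI (mul x (mul y y))); move: H; rewrite !addrA => ->.
by rewrite -(addrA _ (mul x (mul y x))) (addrC (mul x (mul y x))) addrA.
Qed.

Definition E (i : bool) := if i then P else one - P.

Lemma EE i : mul (E i) (E i) = E i.
Proof. case: i => //=. by rewrite mBl (hone _).1 !mBr (hone P).2 hPP subrr subr0. Qed.
Lemma EN i : E (~~ i) = one - E i.
Proof. case: i => //=. by rewrite opprB addrC subrK. Qed.
Lemma Esum i : E i + E (~~ i) = one.
Proof. by rewrite EN addrC subrK. Qed.
Lemma sone : star one = one.
Proof. have H := (hone (star one)).2. have H2 : star (mul (star one) one) = star (star one) by rewrite H.
rewrite sM !sK in H2. by rewrite -[LHS]H. Qed.
Lemma Es i : star (E i) = E i.
Proof. case: i => //=. by rewrite sD sN sone hPs. Qed.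

Lemma L1 X u : mul X X = X -> mul X (mul X u) = mul X u.
Proof. by move=> H; rewrite -halt.1 H. Qed.
Lemma L2 X u : mul X X = X -> mul X (mul (one - X) u) = 0.
Proof. by move=> H; rewrite mBl (hone u).1 mBr L1 // subrr. Qed.
Lemma R1 X u : mul X X = X -> mul (mul u X) X = mul u X.
Proof. by move=> H; rewrite halt.2 H. Qed.
Lemma R2 X u : mul X X = X -> mul (mul u (one - X)) X = 0.
Proof. by move=> H; rewrite mBr (hone u).2 mBl R1 // subrr. Qed.
Lemma M2 X u : mul X (mul u (one - X)) = mul (mul X u) (one - X).
Proof. by rewrite !mBr (hone u).2 (hone _).2 flex. Qed.

Lemma Nb (i k : bool) : (k == i) = false -> k = ~~ i.
Proof. by case: i; case: k. Qed.

Lemma B1 i k u : mul (E i) (mul (E k) u) = if k == i then mul (E i) u else 0.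
Proof.
case: ifP => [/eqP->|/Nb->]; first exact: L1 (EE i).
rewrite EN; exact: L2 (EE i).
Qed.
Lemma B2 j k u : mul (mul u (E k)) (E j) = if k == j then mul u (E j) else 0.
Proof.
case: ifP => [/eqP->|/Nb->]; first exact: R1 (EE j).
rewrite EN; exact: R2 (EE j).
Qed.
Lemma B3 i j u : mul (E i) (mul u (E j)) = mul (mul (E i) u) (E j).
Proof.
case: (boolP (j == i)) => [/eqP->|/negbTE/Nb->]; first by rewrite flex.
by rewrite EN M2.
Qed.

Definition c i j u := mul (mul (E i) u) (E j).

Lemma F2 i j k u : c i j (mul (E k) u) = if k == i then c i j u else 0.
Proof. by rewrite /c B1; case: ifP => // _; rewrite m0l. Qed.
Lemma F3 i j k u : c i j (mul u (E k)) = if k == j then c i j u else 0.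
Proof. by rewrite /c B3 B2. Qed.
Lemma F4 i j u : c i j (star u) = star (c j i u).
Proof. by rewrite /c sM sM !Es B3. Qed.
Lemma F6 i u : u = c i i u + c i (~~ i) u + c (~~ i) i u + c (~~ i) (~~ i) u.
Proof.
have H : u = mul (mul one u) one by rewrite (hone u).1 (hone u).2.
rewrite {1}H -(Esum i) !mDl !mDr /c.
by rewrite -!addrA; congr (_ + _); rewrite !addrA; congr (_ + _); rewrite addrC.
Qed.
Lemma cD i j u v : c i j (u + v) = c i j u + c i j v.
Proof. by rewrite /c mDr mDl. Qed.
Lemma cZ i j k u : c i j (k *: u) = k *: c i j u.
Proof. by rewrite /c mZr mZl. Qed.
Lemma c0 i j : c i j 0 = 0.
Proof. by rewrite /c m0r m0l. Qed.
Lemma cN i j u : c i j (- u) = - c i j u.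
Proof. by rewrite /c mNr mNl. Qed.
Lemma cc i j u : c i j (c i j u) = c i j u.
Proof. by rewrite [c i j u]/c F3 eqxx F2 eqxx. Qed.

Section Mem.
Variables (i j : bool) (w : A).
Hypothesis Hw : c i j w = w.
Lemma memL k : mul (E k) w = if k == i then w else 0.
Proof.
rewrite -{1}Hw /c B3 B1 eq_sym; case: ifP => [/eqP->|_]; first exact: Hw.
exact: m0l.
Qed.
Lemma memR k : mul w (E k) = if k == j then w else 0.
Proof. by rewrite -{1}Hw /c B2 eq_sym; case: ifP => [/eqP->|]. Qed.
Lemma memS : c j i (star w) = star w.
Proof. by rewrite F4 Hw. Qed.
Lemma memc k l : c k l w = if (k == i) && (l == j) then w else 0.
Proof.
rewrite -{1}Hw [c i j w]/c F3 F2.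
case: (boolP (j == l)) => [/eqP<-|/negbTE jl]; case: (boolP (i == k)) => [/eqP<-|/negbTE ik];
  rewrite ?eqxx ?Hw //= ?(eq_sym l) ?jl ?(eq_sym k) ?ik ?andbF //.
Qed.
End Mem.
Arguments memL {i j w} Hw k. Arguments memR {i j w} Hw k.
Arguments memS {i j w} Hw. Arguments memc {i j w} Hw k l.

Lemma Nbi i : (~~ i == i) = false. Proof. by case: i. Qed.
Lemma iNb i : (i == ~~ i) = false. Proof. by case: i. Qed.

Variables (B : lmodType CC) (mulB : B -> B -> B) (starB : B -> B).
Hypothesis hbilB : bilinear_mul mulB.
Hypothesis hinvB : is_involution mulB starB.
Variables (Phi : A -> B) (g : B -> A).
Hypothesis hK : cancel Phi g.
Hypothesis hK' : cancel g Phi.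
Variable (e : CC).
Hypothesis he : e = 1 \/ e = -1.
Local Notation op := (@opg A mul star e).
Local Notation opB := (@opg B mulB starB e).
Hypothesis hpres : forall a b, Phi (op a b) = opB (Phi a) (Phi b).
Local Notation opBDl := (@opgDl B mulB hbilB starB e hinvB).
Local Notation opBDr := (@opgDr B mulB hbilB starB e).
Local Notation opB0l := (@opg0l B mulB hbilB starB e hinvB).

Lemma injP : injective Phi. Proof. exact: can_inj hK. Qed.

Lemma Phi0 : Phi 0 = 0.
Proof.
have H : op (g 0) 0 = 0 by rewrite /op /opg m0r m0l scaler0 addr0.
by rewrite -{1}H hpres hK' opB0l.
Qed.

Lemma addL3 t u v w x : Phi t = Phi u + Phi v + Phi w ->
  Phi (op t x) = Phi (op u x) + Phi (op v x) + Phi (op w x).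
Proof. by move=> H; rewrite !hpres H !opBDl. Qed.
Lemma addR3 t u v w x : Phi t = Phi u + Phi v + Phi w ->
  Phi (op x t) = Phi (op x u) + Phi (op x v) + Phi (op x w).
Proof. by move=> H; rewrite !hpres H !opBDr. Qed.

Lemma cjN (z : CC) : Num.conj (- z) = - Num.conj z. Proof. exact: rmorphN. Qed.

Arguments addL3 {t u v w} x. Arguments addR3 {t u v w} x.

Lemma lam : exists l m : CC, [/\ l + e * Num.conj m = 0, m + e * Num.conj l = 0,
   l + e * Num.conj l != 0 & m + e * Num.conj m != 0].
Proof.
case: he => ->.
  exists 1, (-1); rewrite !mul1r !rmorphN !rmorph1.
  split; first by rewrite subrr. by rewrite addrC subrr.
  by rewrite -mulr2n mulrn_eq0 oner_eq0.
  by rewrite -opprD oppr_eq0 -mulr2n mulrn_eq0 oner_eq0.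
exists 'i, (-'i); rewrite !mulN1r !cjN conjCi !opprK.
split; first by rewrite subrr. by rewrite addrC subrr.
  by rewrite -mulr2n mulrn_eq0 neq0Ci.
  by rewrite -opprD oppr_eq0 -mulr2n mulrn_eq0 neq0Ci.
Qed.

Local Notation opA0l := (@opg0l A mul hbil star e hinv).
Lemma opA0r x : op x 0 = 0.
Proof. by rewrite /opg m0r m0l scaler0 addr0. Qed.

Lemma opx i k q l m w : c k q w = w ->
  op (l *: E i + m *: E (~~ i)) w =
  ((if k == i then l else m) + e * Num.conj (if q == i then l else m)) *: w.
Proof.
move=> H; rewrite /opg sD !sZ !Es mDl !mZl mDr !mZr (memL H) (memL H) (memR H) (memR H).
clear H; by case: i; case: k; case: q => /=; rewrite ?scaler0 ?addr0 ?add0r scalerDl scalerA.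
Qed.

Arguments opx i {k q} l m {w}.

Lemma cx i p q l m u :
  c p q (op (l *: E i + m *: E (~~ i)) u) =
  ((if p == i then l else m) + e * Num.conj (if q == i then l else m)) *: c p q u.
Proof.
rewrite /opg sD !sZ !Es mDl !mZl mDr !mZr !cD !cZ !cD !cZ !F2 !F3.
by case: i; case: p; case: q => /=; rewrite ?scaler0 ?addr0 ?add0r scalerDl scalerA.
Qed.

Lemma cop1 p q k u : c p q (op u (E k)) =
  (if k == q then c p q u else 0) + e *: (if k == p then star (c q p u) else 0).
Proof. by rewrite /opg cD cZ F3 F2 F4. Qed.
Lemma cop2 p q k u : c p q (op (E k) u) =
  (if k == p then c p q u else 0) + e *: (if k == q then c p q u else 0).
Proof. by rewrite /opg Es cD cZ F2 F3. Qed.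
Lemma opm1 p q k w : c p q w = w ->
  op w (E k) = (if k == q then w else 0) + e *: (if k == q then star w else 0).
Proof. by move=> H; rewrite /opg (memR H) (memL (memS H)). Qed.
Lemma opm2 p q k w : c p q w = w ->
  op (E k) w = (if k == p then w else 0) + e *: (if k == q then w else 0).
Proof. by move=> H; rewrite /opg Es (memL H) (memR H). Qed.

Arguments opm1 {p q} k {w}. Arguments opm2 {p q} k {w}.

Lemma two i b d : c i (~~ i) b = b -> c (~~ i) i d = d -> Phi (b + d) = Phi b + Phi d.
Proof.
move=> Hb Hd.
pose t := g (Phi b + Phi d).
have Ht : Phi t = Phi 0 + Phi b + Phi d by rewrite hK' Phi0 add0r.
have E1 : op t (E (~~ i)) = op b (E (~~ i)).
  apply: injP; rewrite (addL3 _ Ht) opA0l (opm1 _ Hd) Nbi scaler0 !addr0 Phi0 add0r.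
  by rewrite ?Phi0 ?addr0 ?add0r.
have c1 : c i (~~ i) t = b.
  have := congr1 (c i (~~ i)) E1; rewrite !cop1 eqxx Nbi scaler0 !addr0 Hb; exact.
have E2 : op t (E i) = op d (E i).
  apply: injP; rewrite (addL3 _ Ht) opA0l (opm1 _ Hb) iNb scaler0 !addr0 Phi0 add0r.
  by rewrite ?Phi0 ?addr0 ?add0r.
have c2 : c (~~ i) i t = d.
  have := congr1 (c (~~ i) i) E2; rewrite !cop1 eqxx iNb scaler0 !addr0 Hd; exact.
have [l [m [h1 h2 h3 h4]]] := lam.
have E3 : op (l *: E i + m *: E (~~ i)) t = 0.
  apply: injP; rewrite (addR3 _ Ht) opA0r (opx _ _ _ Hb) (opx _ _ _ Hd) eqxx Nbi h1 h2.
  by rewrite !scale0r !Phi0 !addr0.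
have c3 : c i i t = 0.
  have := congr1 (c i i) E3; rewrite cx eqxx c0 => H.
  by apply: (scalerI h3); rewrite H scaler0.
have c4 : c (~~ i) (~~ i) t = 0.
  have := congr1 (c (~~ i) (~~ i)) E3; rewrite cx Nbi c0 => H.
  by apply: (scalerI h4); rewrite H scaler0.
have -> : b + d = t by rewrite (F6 i t) c1 c2 c3 c4 addr0 add0r.
by rewrite hK'.
Qed.

Lemma three i a b d : c i i a = a -> c i (~~ i) b = b -> c (~~ i) i d = d ->
  Phi (a + b + d) = Phi a + Phi b + Phi d.
Proof.
move=> Ha Hb Hd.
pose t := g (Phi a + Phi b + Phi d).
have Ht : Phi t = Phi a + Phi b + Phi d by rewrite hK'.
have [l [m [h1 h2 h3 h4]]] := lam.
have E3 : op (l *: E i + m *: E (~~ i)) t = (l + e * Num.conj l) *: a.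
  apply: injP; rewrite (addR3 _ Ht) (opx _ _ _ Ha) (opx _ _ _ Hb) (opx _ _ _ Hd) eqxx Nbi h1 h2.
  by rewrite !scale0r !Phi0 !addr0.
have c3 : c i i t = a.
  have := congr1 (c i i) E3; rewrite cx eqxx cZ Ha => H.
  exact: (scalerI h3).
have c4 : c (~~ i) (~~ i) t = 0.
  have := congr1 (c (~~ i) (~~ i)) E3; rewrite cx Nbi cZ (memc Ha) Nbi /= scaler0 => H.
  by apply: (scalerI h4); rewrite H scaler0.
have E1 : op t (E (~~ i)) = op b (E (~~ i)).
  apply: injP; rewrite (addL3 _ Ht) (opm1 _ Ha) (opm1 _ Hd) Nbi scaler0 !addr0 Phi0 add0r.
  by rewrite ?Phi0 ?addr0 ?add0r.
have c1 : c i (~~ i) t = b.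
  have := congr1 (c i (~~ i)) E1; rewrite !cop1 eqxx Nbi scaler0 !addr0 Hb; exact.
have E2 : op (E (~~ i)) t = e *: b + d.
  apply: injP; rewrite (addR3 _ Ht) (opm2 _ Ha) (opm2 _ Hb) (opm2 _ Hd) eqxx Nbi.
  rewrite scaler0 !addr0 add0r Phi0 add0r.
  by rewrite (@two i (e *: b) d) // cZ Hb.
have c2 : c (~~ i) i t = d.
  have := congr1 (c (~~ i) i) E2; rewrite cop2 eqxx Nbi scaler0 addr0 cD cZ (memc Hb) Hd.
  by rewrite Nbi /= scaler0 add0r.
have -> : a + b + d = t by rewrite (F6 i t) c1 c2 c3 c4 addr0.
by rewrite hK'.
Qed.
End Peirce.

Theorem claim2p3 (A B : lmodType CC)
    (mulA : A -> A -> A) (starA : A -> A) (nrmA : A -> CC) (oneA : A)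
    (mulB : B -> B -> B) (starB : B -> B)
    (hA : alt_Wstar_factor mulA starA nrmA oneA)
    (hB : alt_star_algebra mulB starB)
    (Phi : A -> B) (hbij : bijective Phi)
    (hpres : preserves_plus mulA starA mulB starB Phi \/
             preserves_minus mulA starA mulB starB Phi)
    (p1 : A) (hp1 : is_projection mulA starA p1) (hp1ne : p1 <> oneA) :
  let p2 := oneA - p1 in
  forall a11 b12 c21 d22 : A,
    peirce mulA p1 p1 a11 -> peirce mulA p1 p2 b12 ->
    peirce mulA p2 p1 c21 -> peirce mulA p2 p2 d22 ->
    Phi (a11 + b12 + c21) = Phi a11 + Phi b12 + Phi c21 /\
    Phi (b12 + c21 + d22) = Phi b12 + Phi c21 + Phi d22.

Proof.
move=> p2 a11 b12 c21 d22 [x1 ->] [x2 ->] [x3 ->] [x4 ->].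
case: hA => [[[hbil halt hinv] _ _ _ _] _ _ hone].
case: hB => [hbilB _ hinvB].
case: hbij => g hK hK'.
case: hp1 => _ hPs hPP.
have [e he hpres'] : exists2 e : CC, (e = 1 \/ e = -1) &
    forall a b, Phi (@opg A mulA starA e a b) = @opg B mulB starB e (Phi a) (Phi b).
  case: hpres => H.
    by exists 1; [left | move=> a b; rewrite /opg !scale1r; exact: H].
  by exists (-1); [right | move=> a b; rewrite /opg !scaleN1r; exact: H].
have T := @three A mulA starA oneA p1 hbil halt hinv hone hPs hPP B mulB starB hbilB hinvB Phi g hK hK' e he hpres'.
have C := @cc A mulA oneA p1 hbil halt hone hPP.
split.
  exact: (T true (c A mulA oneA p1 true true x1) (c A mulA oneA p1 true false x2)
     (c A mulA oneA p1 false true x3) (C _ _ _) (C _ _ _) (C _ _ _)).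
have := (T false (c A mulA oneA p1 false false x4) (c A mulA oneA p1 false true x3)
     (c A mulA oneA p1 true false x2) (C _ _ _) (C _ _ _) (C _ _ _)).
rewrite /c /E /= -/p2 => H.
rewrite addrC (addrC (mulA (mulA p1 x2) p2)) addrA H.
by rewrite addrC (addrC (Phi (mulA (mulA p2 x4) p2))) addrA.
Qed.
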